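(* Let $\mathbf d=(d_1,\ldots,d_n)$ be a graphical degree sequence and let $H_1$ and $H_2$ be two edge-disjoint graphs on $[n]$. Suppose that $\mathbf d^{H_1}\preceq \mathbf d$ and that $uv\notin H_1\cup H_2$. Then \[ \mathbb P\big(uv\in \mathcal G(n,\mathbf d)\mid H_1^+, H_2^-\big)\le \frac{(d_u-d^{H_1}_u)(d_v-d^{H_1}_v)}{M-2e(H_1)}\cdot f(\mathbf d,H_1,H_2), \] \[ \mathbb P\big(uv\in \mathcal G(n,\mathbf d)\mid H_1^+, H_2^-\big)\ge \frac{(d_u-d^{H_1}_u)(d_v-d^{H_1}_v)}{M-2e(H_1)}\cdot g(\mathbf d,H_1,H_2), \] where \[ f(\mathbf d,H_1,H_2)=\left(1-\frac{3J(\mathbf d)+\Delta(8+d_u^{H_2}+d_v^{H_2})}{M-2e(H_1)}-\frac{2e(H_2)\Delta^2}{(M-2e(H_1))^2}+\frac{(d_v-d_v^{H_1})(d_u-d_u^{H_1})}{M-2e(H_1)}\right)^{-1}, \] \[ g(\mathbf d,H_1,H_2)=\left(1- \frac{2J(\mathbf d)+6\Delta+2\Delta(H_2)\Delta}{M-2e(H_1)} \right)\left(1+ \frac{(d_v-d_v^{H_1})(d_u-d_u^{H_1})}{M-2e(H_1)} \right)^{-1}. \]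
   Context: For a sequence $\mathbf d=(d_1,\ldots,d_n)$ of nonnegative integers, $\mathcal G(n,\mathbf d)$ denotes a uniformly random simple graph on vertex set $[n]$ in which vertex $i$ has degree $d_i$ for every $i$; $\mathbf d$ is graphical if at least one such graph exists. $\Delta=\max_i d_i$, $M=\sum_{i=1}^n d_i$, and $J(\mathbf d)$ is the sum of the $\Delta$ largest entries of $\mathbf d$ (i.e. if $d_1\ge d_2\ge\cdots\ge d_n$, then $J(\mathbf d)=\sum_{i=1}^{\Delta}d_i$). For a graph $H$ on $[n]$, $e(H)$ is its number of edges, $\Delta(H)$ its maximum degree, and $d^H_i$ the degree of vertex $i$ in $H$; $\mathbf d^H=(d^H_1,\dots,d^H_n)$, and $\mathbf d^H\preceq\mathbf d$ means $d^H_i\le d_i$ for all $i$. Graphs on $[n]$ are identified with their edge sets; two such graphs are disjoint if their edge sets are disjoint. $H^+$ denotes the event $H\subseteq\mathcal G(n,\mathbf d)$, and $H^-$ denotes the event that $\mathcal G(n,\mathbf d)$ contains no edge of $H$.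
   Formalization: The upper bound by the product with f(d,H₁,H₂) is asserted only when the bracket whose inverse defines f is positive. The statement above fails without it. *)

(* Defs.v *)
(* Graphs on [n] = 'I_n are identified with their edge sets:
   a graph is a set of 2-element subsets of 'I_n. *)
From mathcomp Require Import all_boot all_order all_algebra.
Set Implicit Arguments. Unset Strict Implicit. Unset Printing Implicit Defensive.
Import Order.TTheory GRing.Theory Num.Theory.

Section Graphs.
Variable n : nat.

Definition simple_graph (G : {set {set 'I_n}}) : bool := [forall e in G, #|e| == 2].

Definition deg (G : {set {set 'I_n}}) (i : 'I_n) : nat := #|[set e in G | i \in e]|.

Definition nedges (G : {set {set 'I_n}}) : nat := #|G|.

Definition maxdeg (G : {set {set 'I_n}}) : nat := \max_(i : 'I_n) deg G i.

Definition sumd (d : 'I_n -> nat) : nat := \sum_(i : 'I_n) d i.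

Definition maxd (d : 'I_n -> nat) : nat := \max_(i : 'I_n) d i.

Definition Jd (d : 'I_n -> nat) : nat :=
  \sum_(k < maxd d) nth 0 (sort geq [seq d i | i <- enum 'I_n]) k.

Definition degseq_graphs (d : 'I_n -> nat) : {set {set {set 'I_n}}} :=
  [set G : {set {set 'I_n}} | simple_graph G && [forall i, deg G i == d i]].

Definition graphical (d : 'I_n -> nat) : bool := degseq_graphs d != set0.

Definition cond_event (d : 'I_n -> nat) (H1 H2 : {set {set 'I_n}}) :
  {set {set {set 'I_n}}} :=
  [set G in degseq_graphs d | (H1 \subset G) && [disjoint H2 & G]].

(* P( uv in G(n,d) | H1^+, H2^- ) for the uniform distribution on degseq_graphs d *)
Definition cond_prob_edge (R : realFieldType) (d : 'I_n -> nat)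
  (H1 H2 : {set {set 'I_n}}) (u v : 'I_n) : R :=
  (#|[set G in cond_event d H1 H2 | [set u; v] \in G]|)%:R
    / (#|cond_event d H1 H2|)%:R.

End Graphs.

(* Main.v *)
Require Import Defs.
From mathcomp Require Import all_boot all_order all_algebra.
From mathcomp Require Import zify ring lra.
Import Order.TTheory GRing.Theory Num.Theory.
Set Implicit Arguments. Unset Strict Implicit. Unset Printing Implicit Defensive.

Lemma geq_transitive : transitive geq.
Proof. move=> a b c /= h1 h2; exact: leq_trans h2 h1. Qed.

Lemma topk_sorted (s t : seq nat) : sorted geq s ->
  (forall x, count_mem x t <= count_mem x s) -> sumn t <= sumn (take (size t) s).
Proof.
elim: s t => [|m s IH] t srt ct.
  case: t ct => [|y t] ct //=.
  by have := ct y; rewrite /= eqxx.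
move: srt; rewrite /= (path_sortedE geq_transitive) => /andP[/allP mge srt'].
case: t ct => [|y0 t0] ct; first by [].
have [y [t' [pt ylem ct']]] : exists y t', [/\ perm_eq (y0 :: t0) (y :: t'), y <= m &
     forall x, count_mem x t' <= count_mem x s].
  case mt: (m \in y0 :: t0).
    exists m, (rem m (y0 :: t0)). split; first exact: perm_to_rem. by [].
    move=> x; have := ct x; rewrite (permP (perm_to_rem mt)) /=.
    by rewrite leq_add2l.
  exists y0, t0; split => //.
    have := ct y0; rewrite /= eqxx add1n => h.
    have : y0 \in m :: s by rewrite -has_pred1 has_count; move: h; rewrite /=; lia.
    by rewrite inE => /orP[/eqP->//|/mge].
  move=> x; have := ct x; rewrite /=.
  case: (x =P m) => [->|/eqP nxm]; last by rewrite (eq_sym m) (negbTE nxm) add0n; lia.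
  move: mt; rewrite inE => /negbT; rewrite negb_or => /andP[ne nin].
  have -> : count_mem m t0 = 0 by apply/eqP; rewrite -leqn0 leqNgt -has_count has_pred1.
  by move=> _; rewrite leq0n.
rewrite (perm_sumn pt) (perm_size pt) /=.
apply: leq_add => //. exact: IH.
Qed.

Lemma sumn_take_nth (s : seq nat) K : sumn (take K s) = \sum_(k < K) nth 0 s k.
Proof.
elim: s K => [|a s IH] K.
  by rewrite /= big1 // => k _; rewrite nth_nil.
case: K => [|K]; first by rewrite big_ord0.
by rewrite /= big_ord_recl /= IH.
Qed.

Lemma sum_ord_mono (f : nat -> nat) a b : a <= b -> \sum_(k < a) f k <= \sum_(k < b) f k.
Proof.
move=> ab; rewrite -!(big_mkord xpredT f) (big_cat_nat (leq0n a) ab) /=.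
exact: leq_addr.
Qed.

Lemma enum_subseq n (S : {set 'I_n}) : subseq (enum S) (enum 'I_n).
Proof. rewrite /enum_mem subseq_filter filter_subseq andbT; exact/allP. Qed.

Lemma sum_le_J n (d : 'I_n -> nat) (S : {set 'I_n}) :
  #|S| <= maxd d -> \sum_(i in S) d i <= Jd d.
Proof.
move=> hS; rewrite /Jd -sumn_take_nth.
set s := sort geq _.
have srt : sorted geq s by apply: sort_sorted => a b; exact: leq_total.
have -> : \sum_(i in S) d i = sumn (map d (enum S)).
  by rewrite sumnE big_map big_enum.
apply: leq_trans (topk_sorted srt _) _.
  move=> x; rewrite /s (permP (permEl (perm_sort _ _))).
  exact/leq_count_subseq/map_subseq/enum_subseq.
rewrite size_map -cardE !sumn_take_nth; exact: sum_ord_mono.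
Qed.


Section GraphBasics.
Variable n : nat.
Local Notation V := ('I_n).
Local Notation Gr := {set {set V}}.

Definition nbr (K : Gr) (x : V) : {set V} := [set y | [set x; y] \in K].

Lemma sum_ind (T : finType) (b : pred T) : \sum_(t : T) (b t : nat) = #|[set t | b t]|.
Proof. by rewrite -sum1dep_card [RHS]big_mkcond; apply: eq_bigr => t _; case: (b t). Qed.

Lemma sum_ind_in (T : finType) (A : {set T}) (b : pred T) :
  \sum_(t in A) (b t : nat) = #|[set t in A | b t]|.
Proof.
rewrite -sum1dep_card big_mkcond [RHS]big_mkcond; apply: eq_bigr => t _.
by case: (t \in A); case: (b t).
Qed.

Lemma set2_eq (a b c e : V) : [set a; b] = [set c; e] -> (a = c /\ b = e) \/ (a = e /\ b = c).
Proof.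
move=> h.
have ha : a \in [set c; e] by rewrite -h set21.
have hb : b \in [set c; e] by rewrite -h set22.
have hc : c \in [set a; b] by rewrite h set21.
have he : e \in [set a; b] by rewrite h set22.
move: ha hb hc he; rewrite !inE => /orP[]/eqP-> /orP[]/eqP-> /orP[]/eqP ? /orP[]/eqP ?; subst; tauto.
Qed.

Lemma simple_sub (G K : Gr) : simple_graph G -> K \subset G -> simple_graph K.
Proof.
move=> /forallP sG /subsetP KG; apply/forallP => e; apply/implyP => eK.
exact: (implyP (sG e)) (KG _ eK).
Qed.

Lemma simple_edge (G : Gr) e : simple_graph G -> e \in G -> #|e| = 2.
Proof. by move=> /forallP sG eG; apply/eqP; exact: (implyP (sG e)). Qed.

Lemma edge_neq (G : Gr) x y : simple_graph G -> [set x; y] \in G -> x != y.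
Proof.
move=> sG /(simple_edge sG); apply: contra_eqN => /eqP->.
by rewrite setUid cards1.
Qed.

Lemma card_nbr (K : Gr) x : simple_graph K -> #|nbr K x| = deg K x.
Proof.
move=> sK; rewrite /deg.
have -> : [set e in K | x \in e] = [set [set x; y] | y in nbr K x].
  apply/setP => e; rewrite inE; apply/andP/imsetP.
    move=> [eK xe]; have /eqP/cards2P [a [b [ab ee]]] := simple_edge sK eK.
    move: xe; rewrite ee in_set2 => /orP[]/eqP xa.
      by exists b; rewrite ?inE xa -?ee.
    by exists a; rewrite ?inE xa setUC -?ee.
  by move=> [y]; rewrite inE => yK ->; rewrite set21.
rewrite card_in_imset // => y1 y2; rewrite !inE => y1K y2K /set2_eq [[_ ->]|[-> ->]] //.
Qed.

Lemma sum_pairs_x (K : Gr) x : simple_graph K ->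
  \sum_(y : V) ([set x; y] \in K : nat) = deg K x.
Proof. by move=> sK; rewrite sum_ind -card_nbr. Qed.

Lemma sum_pairs_y (K : Gr) y : simple_graph K ->
  \sum_(x : V) ([set x; y] \in K : nat) = deg K y.
Proof.
move=> sK; rewrite -(sum_pairs_x y sK); apply: eq_bigr => x _; by rewrite setUC.
Qed.

Lemma sum_deg (K : Gr) : simple_graph K -> \sum_(i : V) deg K i = 2 * #|K|.
Proof.
move=> sK.
have -> : \sum_(i : V) deg K i = \sum_(i : V) \sum_(e in K) (i \in e : nat).
  by apply: eq_bigr => i _; rewrite sum_ind_in.
rewrite exchange_big /= -sum1_card big_distrr /=; apply: eq_bigr => e eK.
rewrite sum_ind muln1 -(simple_edge sK eK); have -> : [set t | t \in e] = e by apply/setP => i; rewrite inE.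
by [].
Qed.

Lemma deg_setD (G H : Gr) x : H \subset G -> deg (G :\: H) x + deg H x = deg G x.
Proof.
move=> /subsetP HG; rewrite /deg -(cardsID H [set e in G | x \in e]).
have -> : [set e in G | x \in e] :&: H = [set e in H | x \in e].
  apply/setP => e; rewrite !inE; case: (boolP (e \in H)) => [/[dup] eH /HG ->|]; by rewrite ?andbT ?andbF.
have -> : [set e in G | x \in e] :\: H = [set e in G :\: H | x \in e].
  by apply/setP => e; rewrite !inE; case: (e \in H).
by rewrite addnC.
Qed.

Lemma deg_sub (G H : Gr) x : H \subset G -> deg H x <= deg G x.
Proof. by move/(deg_setD x) <-; rewrite leq_addl. Qed.

Lemma sum_cond_deg (K : Gr) (b : pred V) : simple_graph K ->
  \sum_(x : V) \sum_(y : V) (b x && ([set x; y] \in K) : nat) = \sum_(x in [set x | b x]) deg K x.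
Proof.
move=> sK; rewrite [RHS]big_mkcond; apply: eq_bigr => x _; rewrite inE.
case: (b x) => /=; first exact: sum_pairs_x.
by rewrite big1.
Qed.

Lemma sum_cond_deg_y (K : Gr) (b : pred V) : simple_graph K ->
  \sum_(x : V) \sum_(y : V) (b y && ([set x; y] \in K) : nat) = \sum_(y in [set y | b y]) deg K y.
Proof.
move=> sK; rewrite exchange_big [RHS]big_mkcond; apply: eq_bigr => y _; rewrite inE.
case: (b y) => /=; first exact: sum_pairs_y.
by rewrite big1.
Qed.

Lemma deg_set1 (e : {set V}) i : deg [set e] i = (i \in e).
Proof.
rewrite /deg; case: (boolP (i \in e)) => ie.
  by rewrite (_ : [set _ in _ | _] = [set e]) ?cards1 //; apply/setP => f; rewrite !inE; case: eqP => // ->.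
by apply/eqP; rewrite cards_eq0; apply/eqP/setP => f; rewrite !inE; case: eqP => // ->; rewrite (negbTE ie).
Qed.

Lemma degE (X : Gr) i : deg X i = \sum_(f : {set V}) ((f \in X) && (i \in f) : nat).
Proof. by rewrite sum_ind /deg; apply: eq_card => f; rewrite !inE. Qed.

Lemma deg_switch (G R A : Gr) i : R \subset G -> [disjoint A & G] ->
  deg ((G :\: R) :|: A) i + deg R i = deg G i + deg A i.
Proof.
move=> /subsetP RG AG; rewrite !degE -!big_split /=; apply: eq_bigr => f _.
rewrite !inE; case: (i \in f); rewrite ?andbF ?andbT //.
case fG: (f \in G); case fR: (f \in R); case fA: (f \in A) => //=.
- by rewrite (disjointFr AG fA) in fG.
all: first [ by rewrite (disjointFr AG fA) in fG | by have := RG f; rewrite fR fG => /(_ isT) ].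
Qed.

Lemma deg_set3 (r1 r2 r3 : {set V}) i : r1 != r2 -> r1 != r3 -> r2 != r3 ->
  deg [set r1; r2; r3] i = (i \in r1) + (i \in r2) + (i \in r3).
Proof.
move=> h12 h13 h23; rewrite degE (bigD1 r1) ?inE ?eqxx //= (bigD1 r2) ?inE ?eqxx ?orbT 1?eq_sym //=.
rewrite (bigD1 r3) ?inE ?eqxx ?orbT 1?eq_sym ?h13 ?h23 //=.
rewrite big1 ?addn0 ?addnA // => f /andP[/andP[n1 n2] n3].
by rewrite !inE (negbTE n1) (negbTE n2) (negbTE n3).
by rewrite eq_sym.
Qed.

Lemma in_set2_nat (a b i : V) : a != b -> ((i \in [set a; b]) : nat) = (i == a) + (i == b).
Proof.
move=> ab; rewrite in_set2; case: (i =P a) => ia; case: (i =P b) => ib //=; by rewrite -ia -ib eqxx in ab.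
Qed.

Lemma deg_set2 (r1 r2 : {set V}) i : r1 != r2 ->
  deg [set r1; r2] i = (i \in r1) + (i \in r2).
Proof.
move=> h12; rewrite degE (bigD1 r1) ?inE ?eqxx //= (bigD1 r2) ?inE ?eqxx ?orbT 1?eq_sym //=.
rewrite big1 ?addn0 // => f /andP[n1 n2].
by rewrite !inE (negbTE n1) (negbTE n2).
Qed.

Lemma undo_switch (G R A : Gr) : R \subset G -> [disjoint A & G] ->
  ((G :\: R) :|: A) :\: A :|: R = G.
Proof.
move=> /subsetP RG AG; apply/setP => f; rewrite !inE.
case fG: (f \in G); case fR: (f \in R); case fA: (f \in A) => //=.
- by rewrite (disjointFr AG fA) in fG.
all: first [ by rewrite (disjointFr AG fA) in fG | by have := RG f; rewrite fR fG => /(_ isT) ].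
Qed.

Lemma dc (T I : finType) (A B : {set T}) (P Q : T -> I -> bool) (f : T -> I -> T) :
  (forall t i, t \in A -> P t i -> f t i \in B /\ Q (f t i) i) ->
  (forall t1 t2 i, t1 \in A -> t2 \in A -> P t1 i -> P t2 i -> f t1 i = f t2 i -> t1 = t2) ->
  \sum_(t in A) \sum_(i : I) (P t i : nat) <= \sum_(t in B) \sum_(i : I) (Q t i : nat).
Proof.
move=> hmap hinj; rewrite exchange_big [X in _ <= X]exchange_big /=; apply: leq_sum => i _.
rewrite !sum_ind_in.
rewrite -(card_in_imset (f := f^~ i) (D := [set t in A | P t i])).
  apply: subset_leq_card; apply/subsetP => g /imsetP [t]; rewrite inE => /andP[tA Pt] ->.
  by have [h1 h2] := hmap t i tA Pt; rewrite inE h1 h2.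
by move=> t1 t2; rewrite !inE => /andP[? ?] /andP[? ?]; apply: hinj.
Qed.

Lemma disj_set2 (a b : {set V}) (G : Gr) : a \notin G -> b \notin G -> [disjoint [set a; b] & G].
Proof.
move=> aG bG; rewrite -setI_eq0; apply/eqP/setP => f; rewrite !inE.
case: (f =P a) => [->|_]; first by rewrite (negbTE aG) andbF.
by case: (f =P b) => [->|_]; rewrite ?(negbTE bG) ?andbF.
Qed.

Lemma disj_set3 (a b c : {set V}) (G : Gr) : a \notin G -> b \notin G -> c \notin G ->
  [disjoint [set a; b; c] & G].
Proof.
move=> aG bG cG; rewrite -setI_eq0; apply/eqP/setP => f; rewrite !inE.
case: (f =P a) => [->|_]; first by rewrite (negbTE aG) andbF.
case: (f =P b) => [->|_]; first by rewrite (negbTE bG) andbF.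
by case: (f =P c) => [->|_]; rewrite ?(negbTE cG) ?andbF.
Qed.

End GraphBasics.


Section Main.
Variables (n : nat) (d : 'I_n -> nat) (H1 H2 : {set {set 'I_n}}) (u v : 'I_n).
Hypotheses (sH1 : simple_graph H1) (sH2 : simple_graph H2) (uvn : u != v)
  (uvH1 : [set u; v] \notin H1) (uvH2 : [set u; v] \notin H2)
  (hdeg : forall i, deg H1 i <= d i).
Local Notation V := ('I_n).
Local Notation S := (cond_event d H1 H2).
Local Notation e := (fun x y : V => [set x; y]).
Definition K (G : {set {set V}}) := G :\: H1.
Definition Mn := sumd d - 2 * #|H1|.
Local Notation Dl := (maxd d).
Local Notation J := (Jd d).

Lemma inS G : G \in S ->
  [/\ simple_graph G, forall i, deg G i = d i, H1 \subset G & [disjoint H2 & G]].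
Proof.
rewrite !inE => /andP[/andP[sG /forallP dG] /andP[h1 h2]].
by split => // i; apply/eqP.
Qed.

Lemma Ksimple G : G \in S -> simple_graph (K G).
Proof. by case/inS => sG _ _ _; apply: simple_sub sG _; apply: subsetDl. Qed.

Lemma degK G x : G \in S -> deg (K G) x = d x - deg H1 x.
Proof.
case/inS => _ dG h1 _; have := deg_setD x h1; rewrite dG /K; lia.
Qed.

Lemma d_le i : d i <= Dl.
Proof. exact: (leq_bigmax i). Qed.

Lemma degK_le G x : G \in S -> deg (K G) x <= d x.
Proof. by move=> GS; rewrite degK //; apply: leq_subr. Qed.

Lemma H1_le : 2 * #|H1| <= sumd d.
Proof. by rewrite -sum_deg //; apply: leq_sum => i _. Qed.

Lemma sum_K G : G \in S -> \sum_(x : V) \sum_(y : V) ([set x; y] \in K G : nat) = Mn.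
Proof.
move=> GS; have [sG dG h1 _] := inS GS.
rewrite (eq_bigr (fun x => deg (K G) x)) => [|x _]; last exact: sum_pairs_x (Ksimple GS).
rewrite sum_deg ?Ksimple // /Mn /K.
have : 2 * #|G| = sumd d by rewrite -sum_deg // /sumd; apply: eq_bigr => i _.
rewrite cardsD (setIidPr h1).
have : #|H1| <= #|G| by apply: subset_leq_card.
lia.
Qed.

Lemma sum_nbr_J G w : G \in S ->
  \sum_(x in [set x | [set w; x] \in G]) deg (K G) x <= J.
Proof.
move=> GS; have [sG dG h1 _] := inS GS.
apply: (@leq_trans (\sum_(x in [set x | [set w; x] \in G]) d x)).
  by apply: leq_sum => x _; apply: degK_le.
apply: sum_le_J; have := card_nbr w sG; rewrite /nbr => ->; rewrite dG; exact: d_le.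
Qed.

Lemma sum_nbr_H2 G w : G \in S ->
  \sum_(x in [set x | [set w; x] \in H2]) deg (K G) x <= deg H2 w * Dl.
Proof.
move=> GS; apply: (@leq_trans (\sum_(x in [set x | [set w; x] \in H2]) Dl)).
  by apply: leq_sum => x _; apply: leq_trans (degK_le x GS) (d_le x).
by rewrite sum_nat_const; have := card_nbr w sH2; rewrite /nbr => ->.
Qed.

Lemma sum_set1_deg G w : G \in S ->
  \sum_(x in [set x | x == w]) deg (K G) x <= Dl.
Proof.
move=> GS; rewrite (_ : [set x | x == w] = [set w]); last by apply/setP => x; rewrite !inE.
by rewrite big_set1; apply: leq_trans (degK_le _ GS) (d_le _).
Qed.


Definition fwd G x y := [&& [set x; y] \in K G, [set u; x] \notin G, [set v; y] \notin G,
  [set u; x] \notin H2, [set v; y] \notin H2, x != u & y != v].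
Definition sw G x y := (G :\: [set [set u; v]; [set x; y]]) :|: [set [set u; x]; [set v; y]].
Definition bwd G x y := ([set u; x] \in K G) && ([set v; y] \in K G).

Lemma sw_ok G x y : G \in S -> [set u; v] \in G -> fwd G x y ->
  [/\ sw G x y \in S, [set u; v] \notin sw G x y & bwd (sw G x y) x y].
Proof.
move=> GS uvG /and5P[xyK uxG vyG uxH2 /and3P[vyH2 xu yv]].
move: xyK; rewrite /K !inE => /andP[xyH1 xyG].
have [sG dG /subsetP h1 h2] := inS GS.
have xy := edge_neq sG xyG.
have uvxy : [set u; v] != [set x; y].
  apply/eqP => /set2_eq [[ux _]|[uy vx]]; first by rewrite ux eqxx in xu.
  by rewrite -vx uvG in uxG.
have uxvy : [set u; x] != [set v; y].
  apply/eqP => /set2_eq [[uv' _]|[uy xv]]; first by move: uvn; rewrite uv' eqxx.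
  by rewrite xv uvG in uxG.
have RG : [set [set u; v]; [set x; y]] \subset G.
  by apply/subsetP => f; rewrite !inE => /orP[]/eqP->.
have AG : [disjoint [set [set u; x]; [set v; y]] & G] by apply: disj_set2.
have uxH1 : [set u; x] \notin H1 by apply: contra uxG; apply: h1.
have vyH1 : [set v; y] \notin H1 by apply: contra vyG; apply: h1.
split.
- apply/and3P; split; first (apply/andP; split).
  + apply/forallP => f; apply/implyP; rewrite !inE.
    case/or3P => [/andP[_ fG]|/eqP->|/eqP->]; last 2 first.
    * by rewrite cards2 (eq_sym u x) xu.
    * by rewrite cards2 (eq_sym v y) yv.
    * by apply/eqP; apply: simple_edge sG fG.
  + apply/forallP => i; have := deg_switch i RG AG.
    rewrite -/(sw G x y) => hh.
    have ux' : u != x by rewrite eq_sym.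
    have vy' : v != y by rewrite eq_sym.
    have e1 := deg_set2 i uvxy; have e2 := deg_set2 i uxvy; have e3 := dG i.
    rewrite (in_set2_nat i uvn) (in_set2_nat i xy) in e1.
    rewrite (in_set2_nat i ux') (in_set2_nat i vy') in e2.
    move: (sw G x y) hh => Z hh; apply/eqP; rewrite e1 e2 e3 in hh.
    move: hh; move: (nat_of_bool (i == u)) (nat_of_bool (i == v)) (nat_of_bool (i == x)) (nat_of_bool (i == y)) (deg Z i) (d i) => a b c e0 p q hh; clear -hh; lia.
  + apply/subsetP => f fH1; rewrite /sw !inE (h1 _ fH1) andbT.
    case: (f =P [set u; v]) => [?|_]; first by subst f; move: uvH1; rewrite fH1.
    case: (f =P [set x; y]) => [?|_]; first by subst f; rewrite fH1 in xyH1.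
    by [].
  + rewrite -setI_eq0; apply/eqP/setP => f; rewrite /sw !inE.
    case fH2: (f \in H2) => //=.
    have fG : f \in G = false by apply: (disjointFr h2 fH2).
    rewrite fG andbF /=.
    case: (f =P [set u; x]) => [?|_]; first by subst f; rewrite fH2 in uxH2.
    case: (f =P [set v; y]) => [?|_]; first by subst f; rewrite fH2 in vyH2.
    by [].
- rewrite eqxx /=.
  case: ([set u; v] =P [set u; x]) => [/set2_eq [[_ vx]|[uxe _]]|_].
    by rewrite -vx uvG in uxG.
    by move: xu; rewrite uxe eqxx.
  case: ([set u; v] =P [set v; y]) => [/set2_eq [[uv' _]|[uy vv]]|_] //.
    by move: uvn; rewrite uv' eqxx.
  by move: vyG; rewrite -uy setUC uvG.
- by rewrite /bwd /K /sw !inE uxH1 vyH1 !eqxx /= !orbT.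
Qed.

Lemma sw_RA G x y : G \in S -> [set u; v] \in G -> fwd G x y ->
  [set [set u; v]; [set x; y]] \subset G /\ [disjoint [set [set u; x]; [set v; y]] & G].
Proof.
move=> GS uvG /and5P[xyK uxG vyG _ _].
move: xyK; rewrite /K !inE => /andP[_ xyG].
split; last by apply: disj_set2.
by apply/subsetP => f; rewrite !inE => /orP[]/eqP->.
Qed.

Lemma sw_inj G1 G2 x y : G1 \in S -> [set u; v] \in G1 -> fwd G1 x y ->
  G2 \in S -> [set u; v] \in G2 -> fwd G2 x y -> sw G1 x y = sw G2 x y -> G1 = G2.
Proof.
move=> S1 u1 f1 S2 u2 f2 h.
have [R1 A1] := sw_RA S1 u1 f1; have [R2 A2] := sw_RA S2 u2 f2.
have := congr1 (fun Z => (Z :\: [set [set u; x]; [set v; y]]) :|: [set [set u; v]; [set x; y]]) h.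
by rewrite /sw /= (undo_switch R1 A1) (undo_switch R2 A2).
Qed.

Definition fwd3 G x y a b := [&& [set u; x] \in K G, [set v; y] \in K G, [set a; b] \in K G,
  [set x; a] \notin G & [&& [set y; b] \notin G, [set x; a] \notin H2, [set y; b] \notin H2,
  x != a & y != b]].
Definition sw3 G x y a b := (G :\: [set [set u; x]; [set v; y]; [set a; b]]) :|:
  [set [set u; v]; [set x; a]; [set y; b]].
Definition bwd3 G x y a b := ([set x; a] \in K G) && ([set y; b] \in K G).

Lemma fwd3_facts G x y a b : G \in S -> [set u; v] \notin G -> fwd3 G x y a b ->
  [/\ [set [set u; x]; [set v; y]; [set a; b]] \subset G,
      [disjoint [set [set u; v]; [set x; a]; [set y; b]] & G] &
      [/\ [set u; x] != [set v; y], [set u; x] != [set a; b], [set v; y] != [set a; b],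
          [set u; v] != [set x; a] & [/\ [set u; v] != [set y; b], [set x; a] != [set y; b],
          u != x, v != y & a != b]]].
Proof.
move=> GS uvG /and5P[uxK vyK abK xaG /and5P[ybG xaH2 ybH2 xa yb]].
move: uxK vyK abK; rewrite /K !inE => /andP[uxH1 uxG] /andP[vyH1 vyG] /andP[abH1 abG].
have [sG dG /subsetP h1 h2] := inS GS.
have ux' := edge_neq sG uxG; have vy' := edge_neq sG vyG; have ab := edge_neq sG abG.
have xv : x != v by apply/eqP => xv; move: uvG; rewrite -xv uxG.
have yu : y != u by apply/eqP => yu; move: uvG; rewrite -yu setUC vyG.
split.
- apply/subsetP => f; rewrite !inE; case/orP => [/orP[]|] /eqP-> //.
- exact: disj_set3.
split.
- apply/eqP => /set2_eq [[uv' _]|[uy _]]; first by move: uvn; rewrite uv' eqxx.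
  by move: yu; rewrite uy eqxx.
- apply/eqP => /set2_eq [[ua xb]|[ub xa']]; last by move: xa; rewrite xa' eqxx.
  by move: xaG; rewrite -ua setUC uxG.
- apply/eqP => /set2_eq [[va yb']|[vb ya]]; first by move: yb; rewrite yb' eqxx.
  by move: ybG; rewrite -vb setUC vyG.
- apply/eqP => /set2_eq [[ux2 _]|[_ vx]]; first by move: ux'; rewrite ux2 eqxx.
  by move: xv; rewrite vx eqxx.
split => //.
- apply/eqP => /set2_eq [[uy _]|[_ vy2]]; first by move: yu; rewrite uy eqxx.
  by move: vy'; rewrite vy2 eqxx.
- apply/eqP => /set2_eq [[_ ab2]|[xb ay]]; first by move: ab; rewrite ab2 eqxx.
  by move: xaG; rewrite xb setUC abG.
Qed.

Lemma sw3_ok G x y a b : G \in S -> [set u; v] \notin G -> fwd3 G x y a b ->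
  [/\ sw3 G x y a b \in S, [set u; v] \in sw3 G x y a b & bwd3 (sw3 G x y a b) x y a b].
Proof.
move=> GS uvG hf.
have [RG AG [r12 r13 r23 a12 [a13 a23 ux' vy' ab]]] := fwd3_facts GS uvG hf.
move: hf => /and5P[uxK vyK abK xaG /and5P[ybG xaH2 ybH2 xa yb]].
move: uxK vyK abK; rewrite /K !inE => /andP[uxH1 uxG] /andP[vyH1 vyG] /andP[abH1 abG].
have [sG dG /subsetP h1 h2] := inS GS.
have xaH1 : [set x; a] \notin H1 by apply: contra xaG; apply: h1.
have ybH1 : [set y; b] \notin H1 by apply: contra ybG; apply: h1.
split.
- apply/and3P; split; first (apply/andP; split).
  + apply/forallP => f; apply/implyP; rewrite /sw3 !inE.
    case/or3P => [/andP[_ fG]|/orP[]/eqP->|/eqP->].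
    * by apply/eqP; apply: simple_edge sG fG.
    * by rewrite cards2 uvn.
    * by rewrite cards2 xa.
    * by rewrite cards2 yb.
  + apply/forallP => i; have := deg_switch i RG AG.
    rewrite -/(sw3 G x y a b) => hh.
    have e1 := deg_set3 i r12 r13 r23; have e2 := deg_set3 i a12 a13 a23; have e3 := dG i.
    rewrite (in_set2_nat i ux') (in_set2_nat i vy') (in_set2_nat i ab) in e1.
    rewrite (in_set2_nat i uvn) (in_set2_nat i xa) (in_set2_nat i yb) in e2.
    move: (sw3 G x y a b) hh => Z hh; apply/eqP; rewrite e1 e2 e3 in hh.
    move: hh; move: (nat_of_bool (i == u)) (nat_of_bool (i == v)) (nat_of_bool (i == x))
      (nat_of_bool (i == y)) (nat_of_bool (i == a)) (nat_of_bool (i == b)) (deg Z i) (d i)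
      => p1 p2 p3 p4 p5 p6 p q hh; clear -hh; lia.
  + apply/subsetP => f fH1; rewrite /sw3 !inE (h1 _ fH1) andbT.
    case: (f =P [set u; x]) => [?|_]; first by subst f; rewrite fH1 in uxH1.
    case: (f =P [set v; y]) => [?|_]; first by subst f; rewrite fH1 in vyH1.
    case: (f =P [set a; b]) => [?|_]; first by subst f; rewrite fH1 in abH1.
    by [].
  + rewrite -setI_eq0; apply/eqP/setP => f; rewrite /sw3 !inE.
    case fH2: (f \in H2) => //=.
    have fG : f \in G = false by apply: (disjointFr h2 fH2).
    rewrite fG andbF /=.
    case: (f =P [set u; v]) => [?|_]; first by subst f; move: uvH2; rewrite fH2.
    case: (f =P [set x; a]) => [?|_]; first by subst f; rewrite fH2 in xaH2.
    case: (f =P [set y; b]) => [?|_]; first by subst f; rewrite fH2 in ybH2.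
    by [].
- by rewrite !eqxx /= !orbT.
- by rewrite /bwd3 /K /sw3 !inE xaH1 ybH1 !eqxx /= !orbT.
Qed.

Lemma sw3_inj G1 G2 x y a b : G1 \in S -> [set u; v] \notin G1 -> fwd3 G1 x y a b ->
  G2 \in S -> [set u; v] \notin G2 -> fwd3 G2 x y a b -> sw3 G1 x y a b = sw3 G2 x y a b -> G1 = G2.
Proof.
move=> S1 u1 f1 S2 u2 f2 h.
have [R1 A1 _] := fwd3_facts S1 u1 f1; have [R2 A2 _] := fwd3_facts S2 u2 f2.
have := congr1 (fun Z => (Z :\: [set [set u; v]; [set x; a]; [set y; b]]) :|:
  [set [set u; x]; [set v; y]; [set a; b]]) h.
by rewrite /sw3 /= (undo_switch R1 A1) (undo_switch R2 A2).
Qed.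

Definition badU := 2 * Dl + 2 * J + Dl * (deg H2 u + deg H2 v).
Definition Aprod := (d u - deg H1 u) * (d v - deg H1 v).
Definition badL := 2 * J + 2 * Dl + 2 * (maxdeg H2 * Dl).

Lemma split7 (F0 F1 F2 F3 F4 F5 F6 : 'I_n -> 'I_n -> nat) :
  \sum_(x : V) \sum_(y : V) (F0 x y + F1 x y + F2 x y + F3 x y + F4 x y + F5 x y + F6 x y) =
  \sum_x \sum_y F0 x y + \sum_x \sum_y F1 x y + \sum_x \sum_y F2 x y + \sum_x \sum_y F3 x y +
  \sum_x \sum_y F4 x y + \sum_x \sum_y F5 x y + \sum_x \sum_y F6 x y.
Proof.
rewrite -!big_split /=; apply: eq_bigr => x _; by rewrite -!big_split.
Qed.

Lemma fwd_count G : G \in S -> [set u; v] \in G ->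
  Mn <= \sum_(x : V) \sum_(y : V) (fwd G x y : nat) + badU.
Proof.
move=> GS uvG; rewrite -(sum_K GS).
have sK := Ksimple GS.
have pt : forall x y, (([set x; y] \in K G) : nat) <= fwd G x y
   + ((x == u) && ([set x; y] \in K G)) + ((y == v) && ([set x; y] \in K G))
   + (([set u; x] \in G) && ([set x; y] \in K G)) + (([set v; y] \in G) && ([set x; y] \in K G))
   + (([set u; x] \in H2) && ([set x; y] \in K G)) + (([set v; y] \in H2) && ([set x; y] \in K G)).
  move=> x y; rewrite /fwd; case: ([set x; y] \in K G) => //=.
  by case: (x == u); case: (y == v); case: ([set u; x] \in G); case: ([set v; y] \in G);
     case: ([set u; x] \in H2); case: ([set v; y] \in H2).
apply: leq_trans; first by apply: leq_sum => x _; apply: leq_sum => y _; exact: pt x y.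
rewrite split7.
rewrite (sum_cond_deg (fun x => x == u) sK) (sum_cond_deg_y (fun y => y == v) sK).
rewrite (sum_cond_deg (fun x => [set u; x] \in G) sK) (sum_cond_deg_y (fun y => [set v; y] \in G) sK).
rewrite (sum_cond_deg (fun x => [set u; x] \in H2) sK) (sum_cond_deg_y (fun y => [set v; y] \in H2) sK).
have b1 := sum_set1_deg u GS; have b2 := sum_set1_deg v GS.
have b3 := sum_nbr_J u GS; have b4 := sum_nbr_J v GS.
have b5 := sum_nbr_H2 u GS; have b6 := sum_nbr_H2 v GS.
rewrite /badU -!addnA leq_add2l.
apply: leq_trans (leq_add b1 (leq_add b2 (leq_add b3 (leq_add b4 (leq_add b5 b6))))) _.
clear; move: (Jd d) (maxd d) (deg H2 u) (deg H2 v) => a b c e0; lia.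
Qed.

Lemma bwd_count G : G \in S -> \sum_(x : V) \sum_(y : V) (bwd G x y : nat) = Aprod.
Proof.
move=> GS; have sK := Ksimple GS.
rewrite /bwd (eq_bigr (fun x => ([set u; x] \in K G) * \sum_(y : V) ([set v; y] \in K G))).
  by rewrite -big_distrl /= (sum_pairs_x u sK) (sum_pairs_x v sK) !degK.
by move=> x _; rewrite big_distrr /=; apply: eq_bigr => y _; rewrite mulnb.
Qed.

Lemma bwd3_count G : G \in S ->
  \sum_(x : V) \sum_(y : V) \sum_(a : V) \sum_(b : V) (bwd3 G x y a b : nat) = Mn * Mn.
Proof.
move=> GS; rewrite -(sum_K GS) big_distrl /=; apply: eq_bigr => x _.
rewrite exchange_big /= big_distrl /=; apply: eq_bigr => a _.
rewrite big_distrr /=; apply: eq_bigr => y _.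
rewrite big_distrr /=; apply: eq_bigr => b _.
by rewrite /bwd3 mulnb.
Qed.

Lemma fwd3_count G : G \in S -> [set u; v] \notin G ->
  Aprod * Mn <= \sum_(x : V) \sum_(y : V) \sum_(a : V) \sum_(b : V) (fwd3 G x y a b : nat) + Aprod * badL.
Proof.
move=> GS uvG; have sK := Ksimple GS.
rewrite -(bwd_count GS) !big_distrl /= -big_split /=; apply: leq_sum => x _.
rewrite !big_distrl /= -big_split /=; apply: leq_sum => y _.
rewrite /bwd; case ux: ([set u; x] \in K G); case vy: ([set v; y] \in K G) => //=; rewrite ?mul0n //.
rewrite !mul1n -(sum_K GS).
have pt : forall a b, (([set a; b] \in K G) : nat) <= fwd3 G x y a b
   + ((a == x) && ([set a; b] \in K G)) + ((b == y) && ([set a; b] \in K G))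
   + (([set x; a] \in G) && ([set a; b] \in K G)) + (([set y; b] \in G) && ([set a; b] \in K G))
   + (([set x; a] \in H2) && ([set a; b] \in K G)) + (([set y; b] \in H2) && ([set a; b] \in K G)).
  move=> a b; rewrite /fwd3 ux vy; case: ([set a; b] \in K G) => //=.
  rewrite (eq_sym x a) (eq_sym y b).
  by case: (a == x); case: (b == y); case: ([set x; a] \in G); case: ([set y; b] \in G);
     case: ([set x; a] \in H2); case: ([set y; b] \in H2).
apply: leq_trans; first by apply: leq_sum => a _; apply: leq_sum => b _; exact: pt a b.
rewrite split7.
rewrite (sum_cond_deg (fun a => a == x) sK) (sum_cond_deg_y (fun b => b == y) sK).
rewrite (sum_cond_deg (fun a => [set x; a] \in G) sK) (sum_cond_deg_y (fun b => [set y; b] \in G) sK).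
rewrite (sum_cond_deg (fun a => [set x; a] \in H2) sK) (sum_cond_deg_y (fun b => [set y; b] \in H2) sK).
have b1 := sum_set1_deg x GS; have b2 := sum_set1_deg y GS.
have b3 := sum_nbr_J x GS; have b4 := sum_nbr_J y GS.
have b5 := sum_nbr_H2 x GS; have b6 := sum_nbr_H2 y GS.
have m5 : deg H2 x <= maxdeg H2 by exact: (leq_bigmax x).
have m6 : deg H2 y <= maxdeg H2 by exact: (leq_bigmax y).
rewrite /badL -!addnA leq_add2l.
apply: leq_trans (leq_add b1 (leq_add b2 (leq_add b3 (leq_add b4 (leq_add b5 b6))))) _.
move: m5 m6; clear; move: (Jd d) (maxd d) (deg H2 x) (deg H2 y) (maxdeg H2) => a b c e0 f.
nia.
Qed.

Definition S1 := [set G in S | [set u; v] \in G].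
Definition S0 := [set G in S | [set u; v] \notin G].

Lemma pairs2 (F : V -> V -> nat) : \sum_(x : V) \sum_(y : V) F x y = \sum_(p : V * V) F p.1 p.2.
Proof. exact: pair_bigA. Qed.

Lemma quad (F : V -> V -> V -> V -> nat) :
  \sum_(x : V) \sum_(y : V) \sum_(a : V) \sum_(b : V) F x y a b =
  \sum_(r : (V * V) * (V * V)) F r.1.1 r.1.2 r.2.1 r.2.2.
Proof.
rewrite (pairs2 (fun x y => \sum_(a : V) \sum_(b : V) F x y a b)).
rewrite (eq_bigr (fun p => \sum_(q : V * V) F p.1 p.2 q.1 q.2)); last first.
  by move=> p _; rewrite pairs2.
exact: (pair_bigA _ (fun p q => F p.1 p.2 q.1 q.2)).
Qed.

Lemma countU : #|S1| * Mn <= #|S0| * Aprod + #|S1| * badU.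
Proof.
rewrite -!sum_nat_const.
apply: leq_trans.
  apply: leq_sum => G; rewrite inE => /andP[GS uvG]; exact: fwd_count GS uvG.
rewrite big_split /= leq_add2r.
rewrite (eq_bigr (fun G => \sum_(p : V * V) fwd G p.1 p.2)); last by move=> G _; rewrite pairs2.
rewrite [X in _ <= X](eq_bigr (fun G => \sum_(p : V * V) bwd G p.1 p.2)); last first.
  by move=> G; rewrite inE => /andP[GS _]; rewrite -(pairs2 (bwd G)) bwd_count.
apply: (dc (f := fun G p => sw G p.1 p.2)).
  move=> G p; rewrite inE => /andP[GS uvG] hf.
  have [h1 h2 h3] := sw_ok GS uvG hf.
  by split => //; rewrite inE h1 h2.
move=> G1 G2 p /setIdP[S1' u1] /setIdP[S2' u2] f1 f2.
exact: sw_inj.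
Qed.

Lemma countL : #|S0| * (Aprod * Mn) <= #|S1| * (Mn * Mn) + #|S0| * (Aprod * badL).
Proof.
rewrite -!sum_nat_const.
apply: leq_trans.
  apply: leq_sum => G; rewrite inE => /andP[GS uvG]; exact: fwd3_count GS uvG.
rewrite big_split /= leq_add2r.
rewrite (eq_bigr (fun G => \sum_(r : (V * V) * (V * V)) fwd3 G r.1.1 r.1.2 r.2.1 r.2.2));
  last by move=> G _; rewrite quad.
rewrite [X in _ <= X](eq_bigr (fun G => \sum_(r : (V * V) * (V * V)) bwd3 G r.1.1 r.1.2 r.2.1 r.2.2)); last first.
  by move=> G; rewrite inE => /andP[GS _]; rewrite -(quad (bwd3 G)) bwd3_count.
apply: (dc (f := fun G r => sw3 G r.1.1 r.1.2 r.2.1 r.2.2)).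
  move=> G r; rewrite inE => /andP[GS uvG] hf.
  have [h1 h2 h3] := sw3_ok GS uvG hf.
  by split => //; rewrite inE h1 h2.
move=> G1 G2 r /setIdP[S1' u1] /setIdP[S2' u2] f1 f2.
exact: sw3_inj.
Qed.

Lemma Mn_pos : 0 < #|S1| -> 0 < Mn.
Proof.
move=> /card_gt0P [G /setIdP[GS uvG]].
rewrite -(sum_K GS) (bigD1 u) //= (bigD1 v) //= /K !inE uvG (negbTE uvH1) /=.
by rewrite -addnA.
Qed.

Lemma cardS : #|S| = #|S1| + #|S0|.
Proof.
rewrite -(cardsID [set G : {set {set V}} | [set u; v] \in G] S); congr (_ + _).
  by apply: eq_card => G; rewrite /S1 !in_setI !in_set andbC.
by apply: eq_card => G; rewrite /S0 !in_setD !in_set andbC.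
Qed.
End Main.


Local Open Scope ring_scope.

Lemma up_alg (R : realFieldType) (s0 s1 a m bu T E : R) :
  0 <= s0 -> 0 <= s1 -> 0 < s0 + s1 -> 0 < m -> 0 <= a -> bu <= T -> 0 <= E ->
  s1 * m <= s0 * a + s1 * bu ->
  0 < 1 - T / m - E / m ^+ 2 + a / m ->
  s1 / (s0 + s1) <= a / m * (1 - T / m - E / m ^+ 2 + a / m)^-1.
Proof.
move=> h0 h1 hs hm ha hbT hE hU hf.
set f := 1 - T / m - E / m ^+ 2 + a / m in hf *.
have mf : m * f = m - T - E / m + a.
  rewrite /f; field; lra.
have Em : 0 <= E / m by apply: divr_ge0 => //; lra.
have mfle : m * f <= m - bu + a by rewrite mf; lra.
have mfpos : 0 < m * f by apply: mulr_gt0.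
rewrite ler_pdivrMr //.
have -> : a / m * f^-1 * (s0 + s1) = (a * (s0 + s1)) / (m * f).
  by field; apply/andP; split; lra.
rewrite ler_pdivlMr //.
have := ler_wpM2l h1 mfle.
nra.
Qed.

Lemma lo_alg (R : realFieldType) (s0 s1 a m bl B : R) :
  0 <= s0 -> 0 <= s1 -> 0 < s0 + s1 -> 0 < m -> 0 <= a -> bl <= B -> 0 <= bl ->
  s0 * (a * m) <= s1 * (m * m) + s0 * (a * bl) ->
  a / m * ((1 - B / m) * (1 + a / m)^-1) <= s1 / (s0 + s1).
Proof.
move=> h0 h1 hs hm ha hbB hb0 hL.
set C := a / m.
have C0 : 0 <= C by apply: divr_ge0 => //; lra.
have Cp : 0 < 1 + C by lra.
set w := 1 - B / m.
case: (lerP w 0) => hw.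
  apply: le_trans (_ : 0 <= _); last by apply: divr_ge0 => //; lra.
  rewrite mulr_ge0_le0 //; apply: mulr_le0_ge0 => //; rewrite invr_ge0; lra.
have key : s0 * C * w <= s1.
  have hb : bl / m <= B / m by rewrite ler_pM2r ?invr_gt0.
  have hC : s0 * C * (1 - bl / m) <= s1.
    have e1 : s0 * C * (1 - bl / m) = (s0 * (a * m) - s0 * (a * bl)) / (m * m).
      by rewrite /C; field; lra.
    rewrite e1 ler_pdivrMr; last by apply: mulr_gt0.
    lra.
  apply: le_trans hC; rewrite /w.
  have : 0 <= s0 * C by apply: mulr_ge0.
  nra.
rewrite ler_pdivlMr //.
have -> : C * (w * (1 + C)^-1) * (s0 + s1) = (C * w * (s0 + s1)) / (1 + C).
  by field; lra.
rewrite ler_pdivrMr //.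
have hw1 : w <= 1.
  rewrite /w; have : 0 <= B / m by apply: divr_ge0 => //; lra.
  lra.
have : C * w * s1 <= C * s1.
  by rewrite -mulrA ler_wpM2l // ler_piMl.
nra.
Qed.


Section Final.
Variables (n : nat) (d : 'I_n -> nat) (H1 H2 : {set {set 'I_n}}) (u v : 'I_n).
Hypotheses (sH1 : simple_graph H1) (sH2 : simple_graph H2) (uvn : u != v)
  (uvH1 : [set u; v] \notin H1) (uvH2 : [set u; v] \notin H2)
  (hdeg : forall i, (deg H1 i <= d i)%N).
Local Open Scope ring_scope.

Lemma main_sec (R : realFieldType) :
  cond_event d H1 H2 != set0 ->
  let P : R := cond_prob_edge R d H1 H2 u v in
  let Mr : R := (sumd d)%:R - 2 * (nedges H1)%:R in
  let Dl : R := (maxd d)%:R in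
  let J : R := (Jd d)%:R in
  let C : R := (d u - deg H1 u)%:R * (d v - deg H1 v)%:R / Mr in
  let fden : R := 1 - (3 * J + Dl * (8 + (deg H2 u)%:R + (deg H2 v)%:R)) / Mr
                    - 2 * (nedges H2)%:R * Dl ^+ 2 / Mr ^+ 2 + C in
  let g : R := (1 - (2 * J + 6 * Dl + 2 * (maxdeg H2)%:R * Dl) / Mr) * (1 + C)^-1 in
  (0 < fden -> P <= C * fden^-1) /\ C * g <= P.
Proof.
move=> Sne P Mr Dl J C fden g.
have cS := cardS d H1 H2 u v.
have cU := countU d sH1 sH2 uvn uvH1 uvH2.
have cL := countL d sH1 sH2 uvn uvH1 uvH2.
have mp := Mn_pos sH1 sH2 uvn uvH1 uvH2.
have hle := H1_le sH1 hdeg.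
set s1 := #|S1 d H1 H2 u v| in cS cU cL mp.
set s0 := #|S0 d H1 H2 u v| in cS cU cL.
have hP : P = s1%:R / (s0%:R + s1%:R).
  rewrite /P /cond_prob_edge cS natrD addrC; congr (_%:R / _).
have hM : (Mn d H1)%:R = Mr by rewrite /Mn natrB // natrM /Mr /nedges.
have Spos : (0 < s0 + s1)%N.
  by rewrite addnC -cS card_gt0.
have Spos' : 0 < s0%:R + s1%:R :> R by rewrite -natrD ltr0n.
case: (posnP (Mn d H1)) => Mz.
  have s1z : s1 = 0%N by apply/eqP; rewrite -leqn0 leqNgt; apply/negP => /mp; rewrite Mz.
  have C0 : C = 0 by rewrite /C -hM Mz invr0 mulr0.
  rewrite hP s1z C0 !mul0r; split => //.
have mpos : 0 < Mr by rewrite -hM ltr0n.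
set A1 : R := (d u - deg H1 u)%:R.
set A2 : R := (d v - deg H1 v)%:R.
have J0 : 0 <= J by rewrite ler0n.
have D0 : 0 <= Dl by rewrite ler0n.
have hu0 : 0 <= (deg H2 u)%:R :> R by rewrite ler0n.
have hv0 : 0 <= (deg H2 v)%:R :> R by rewrite ler0n.
have md0 : 0 <= (maxdeg H2)%:R :> R by rewrite ler0n.
have eU : (badU d H2 u v)%:R = 2 * Dl + 2 * J + Dl * ((deg H2 u)%:R + (deg H2 v)%:R) :> R.
  by rewrite /badU /Dl /J; ring.
have eL : (badL d H2)%:R = 2 * J + 2 * Dl + 2 * ((maxdeg H2)%:R * Dl) :> R.
  by rewrite /badL /Dl /J; ring.
have eA : (Aprod d H1 u v)%:R = A1 * A2 :> R by rewrite /Aprod /A1 /A2 natrM.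
have cU' : s1%:R * Mr <= s0%:R * (A1 * A2) + s1%:R * (badU d H2 u v)%:R :> R.
  have e1 : ((s1 * Mn d H1)%:R : R) = s1%:R * Mr by rewrite natrM hM.
  have e2 : ((s0 * Aprod d H1 u v + s1 * badU d H2 u v)%:R : R) =
      s0%:R * (A1 * A2) + s1%:R * (badU d H2 u v)%:R by rewrite natrD !natrM ?eA.
  by rewrite -e1 -e2 ler_nat.
have cL' : s0%:R * (A1 * A2 * Mr) <= s1%:R * (Mr * Mr) + s0%:R * (A1 * A2 * (badL d H2)%:R) :> R.
  have e1 : ((s0 * (Aprod d H1 u v * Mn d H1))%:R : R) = s0%:R * (A1 * A2 * Mr)
    by rewrite !natrM hM ?eA.
  have e2 : ((s1 * (Mn d H1 * Mn d H1) + s0 * (Aprod d H1 u v * badL d H2))%:R : R) =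
      s1%:R * (Mr * Mr) + s0%:R * (A1 * A2 * (badL d H2)%:R) by rewrite natrD !natrM hM ?eA.
  by rewrite -e1 -e2 ler_nat.
have A0 : 0 <= A1 * A2 by apply: mulr_ge0; rewrite ler0n.
split.
- move=> fpos; rewrite hP /C.
  apply: (up_alg (bu := (badU d H2 u v)%:R)) => //.
  + rewrite eU; lra.
  + by apply: mulr_ge0; [apply: mulr_ge0; rewrite ?ler0n | apply: exprn_ge0].
- rewrite hP /g /C.
  apply: (lo_alg (bl := (badL d H2)%:R)) => //.
  + rewrite eL; nra.
Qed.
End Final.


Unset Implicit Arguments.

Theorem theorem1p1 (R : realFieldType) (n : nat) (d : 'I_n -> nat)
    (H1 H2 : {set {set 'I_n}}) (u v : 'I_n) :
  graphical d ->
  simple_graph H1 -> simple_graph H2 -> [disjoint H1 & H2] ->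
  (forall i, (deg H1 i <= d i)%N) ->
  u != v -> [set u; v] \notin H1 :|: H2 ->
  cond_event d H1 H2 != set0 ->
  let P : R := cond_prob_edge R d H1 H2 u v in
  let Mr : R := (sumd d)%:R - 2 * (nedges H1)%:R in
  let Dl : R := (maxd d)%:R in
  let J : R := (Jd d)%:R in
  let C : R := (d u - deg H1 u)%:R * (d v - deg H1 v)%:R / Mr in
  let fden : R := 1 - (3 * J + Dl * (8 + (deg H2 u)%:R + (deg H2 v)%:R)) / Mr
                    - 2 * (nedges H2)%:R * Dl ^+ 2 / Mr ^+ 2 + C in
  let g : R := (1 - (2 * J + 6 * Dl + 2 * (maxdeg H2)%:R * Dl) / Mr) * (1 + C)^-1 in
  (0 < fden -> P <= C * fden^-1) /\ C * g <= P.
Proof.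
move=> _ sH1 sH2 _ hdeg uvn uvH Sne.
have uvH1 : [set u; v] \notin H1 by move: uvH; rewrite in_setU negb_or => /andP[].
have uvH2 : [set u; v] \notin H2 by move: uvH; rewrite in_setU negb_or => /andP[].
by apply: main_sec.
Qed.
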